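(* Let $n\ge 2$ and let $P=c_1\vee\dots\vee c_m$ be a Boolean formula in disjunctive normal form over variables $a_1,\dots,a_n$, where each clause $c_j$ is a conjunction of at least one literal. Let $X=\{x_1,\dots,x_n,t_1,\dots,t_n,f_1,\dots,f_n\}$ (all distinct) and set $x_{n+1}=x_1$. For each $j$ let $S_j=\{t_i: a_i \text{ occurs in } c_j\}\cup\{f_i:\neg a_i\text{ occurs in } c_j\}$. Let $\Sigma$ consist of the implications $\{x_i,t_i\}\rightarrow\{x_{i+1}\}$ and $\{x_i,f_i\}\rightarrow\{x_{i+1}\}$ for $1\le i\le n$, together with $S_j\rightarrow\{x_1\}$ for $1\le j\le m$. Then the closure system on $X$ associated with $\Sigma$ is a convex geometry if and only if $P$ is a tautology (true under every truth assignment).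
   Context: An implication on a set $X$ is a pair $A\rightarrow B$ with $A,B\subseteq X$, $B\ne\emptyset$. For a set $\Sigma$ of implications on $X$, the associated closure system $\langle X,\phi\rangle$ has as closed sets exactly the $S\subseteq X$ such that $A\subseteq S$ implies $B\subseteq S$ for every $(A\rightarrow B)\in\Sigma$, and $\phi(A)$ is the intersection of closed sets containing $A$. A convex geometry is a finite closure system with $\phi(\emptyset)=\emptyset$ satisfying the anti-exchange property: for every closed set $A\subsetneq X$ and all distinct $x,y\in X\setminus A$, $y\notin\phi(A\cup\{x\})$ or $x\notin\phi(A\cup\{y\})$ (equivalently, for every closed $A\subsetneq X$ there is $e\in X\setminus A$ with $A\cup\{e\}$ closed). *)

(* Defs.v *)
From mathcomp Require Import all_boot.
Set Implicit Arguments. Unset Strict Implicit. Unset Printing Implicit Defensive.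

Definition implication (T : finType) := ({set T} * {set T})%type.

Definition closed_for (T : finType) (Sigma : seq (implication T)) (S : {set T}) : bool :=
  all (fun p : implication T => (p.1 \subset S) ==> (p.2 \subset S)) Sigma.

Definition phi (T : finType) (Sigma : seq (implication T)) (A : {set T}) : {set T} :=
  \bigcap_(S : {set T} | closed_for Sigma S && (A \subset S)) S.

Definition convex_geometry (T : finType) (Sigma : seq (implication T)) : Prop :=
  phi Sigma set0 = set0 /\
  forall A : {set T}, closed_for Sigma A -> A != setT ->
  forall x y : T, x != y -> x \notin A -> y \notin A ->
    (y \notin phi Sigma (x |: A)) || (x \notin phi Sigma (y |: A)).

(* literal (true, i) = a_i ; literal (false, i) = ~ a_i *)
Definition literal (n : nat) := (bool * 'I_n)%type.
Definition clause (n : nat) := seq (literal n).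
Definition dnf (n : nat) := seq (clause n).

Definition eval_lit n (v : 'I_n -> bool) (l : literal n) : bool := v l.2 == l.1.
Definition eval_clause n (v : 'I_n -> bool) (c : clause n) : bool := all (eval_lit v) c.
Definition eval_dnf n (v : 'I_n -> bool) (P : dnf n) : bool := has (eval_clause v) P.
Definition tautology n (P : dnf n) : Prop := forall v : 'I_n -> bool, eval_dnf v P.

Definition Xset (n : nat) := ('I_n + 'I_n + 'I_n)%type.
Definition xv n (i : 'I_n) : Xset n := inl (inl i).
Definition tv n (i : 'I_n) : Xset n := inl (inr i).
Definition fv n (i : 'I_n) : Xset n := inr i.

Definition Sclause n (c : clause n) : {set Xset n} :=
  [set (if l.1 then tv l.2 else fv l.2) | l in c].

(* Sigma, where i0 is the first index (x_1 in the paper) and ordS i is i+1 mod n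
   (so x_{n+1} = x_1). *)
Definition Sigma_of n (i0 : 'I_n) (P : dnf n) : seq (implication (Xset n)) :=
  [seq ([set xv i; tv i], [set xv (ordS i)]) | i <- enum 'I_n] ++
  [seq ([set xv i; fv i], [set xv (ordS i)]) | i <- enum 'I_n] ++
  [seq (Sclause c, [set xv i0]) | c <- P].

Definition first_ord n (hn : 1 < n) : 'I_n := Ordinal (ltnW hn).

(* Main.v *)
Require Import Defs.
From mathcomp Require Import all_boot.
From mathcomp Require Import zify.
From Stdlib Require Import Classical.
Set Implicit Arguments. Unset Strict Implicit. Unset Printing Implicit Defensive.

Section Gen.
Variable T : finType.
Variable Sigma : seq (implication T).

Lemma phi_sub (B C : {set T}) : closed_for Sigma C -> B \subset C -> phi Sigma B \subset C.
Proof. by move=> cC BC; apply: bigcap_inf; rewrite cC BC. Qed.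

Lemma sub_phi (B : {set T}) : B \subset phi Sigma B.
Proof. by apply/bigcapsP => S /andP[]. Qed.

Lemma phi_closed (B : {set T}) : closed_for Sigma (phi Sigma B).
Proof.
apply/allP => p Hp; apply/implyP => H; apply/bigcapsP => S /andP[cS BS].
have H' : p.1 \subset S by apply: subset_trans H _; apply: bigcap_inf; rewrite cS BS.
by move/allP: cS => /(_ p Hp) /implyP; apply.
Qed.
End Gen.

Lemma ordS_val n (i : 'I_n) : val (ordS i) = if i.+1 < n then i.+1 else 0.
Proof.
rewrite /=; case: ifP => h; first by rewrite modn_small.
have -> : i.+1 = n by have := ltn_ord i; lia.
by rewrite modnn.
Qed.

Lemma ordS_nat n (i : 'I_n) : nat_of_ord (ordS i) = if i.+1 < n then i.+1 else 0.
Proof. exact: ordS_val. Qed.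

Lemma closedP n i0 (P : dnf n) (C : {set Xset n}) :
  closed_for (Sigma_of i0 P) C <->
  [/\ forall i, xv i \in C -> tv i \in C -> xv (ordS i) \in C,
      forall i, xv i \in C -> fv i \in C -> xv (ordS i) \in C &
      forall c, c \in P -> Sclause c \subset C -> xv i0 \in C].
Proof.
rewrite /closed_for /Sigma_of !all_cat !all_map; split.
  move=> /and3P[/allP H1 /allP H2 /allP H3]; split.
  - move=> i a b; have := H1 i; rewrite -enumT mem_enum => /(_ isT) /=.
    by rewrite subUset !sub1set a b /=; apply.
  - move=> i a b; have := H2 i; rewrite -enumT mem_enum => /(_ isT) /=.
    by rewrite subUset !sub1set a b /=; apply.
  - move=> c cP S; have := H3 c cP => /=.
    by rewrite S sub1set.
move=> [H1 H2 H3]; apply/and3P; split; apply/allP => z zin /=.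
- rewrite subUset !sub1set; apply/implyP => /andP[a b]; exact: H1.
- rewrite subUset !sub1set; apply/implyP => /andP[a b]; exact: H2.
- rewrite sub1set; apply/implyP; exact: H3.
Qed.

Section Main.
Variables (n : nat) (hn : 1 < n) (P : dnf n).
Local Notation i0 := (first_ord hn).
Local Notation Sig := (Sigma_of (first_ord hn) P).

Lemma all_x (C : {set Xset n}) : closed_for Sig C ->
  (forall i, (tv i \in C) || (fv i \in C)) ->
  forall j, xv j \in C -> forall i, xv i \in C.
Proof.
move=> /closedP [H1 H2 _] Htf.
have step : forall i, xv i \in C -> xv (ordS i) \in C.
  by move=> i xi; case/orP: (Htf i) => h; [apply: H1|apply: H2].
have up : forall (j : 'I_n) d (hk : j + d < n), xv j \in C -> xv (Ordinal hk) \in C.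
  move=> j d; elim: d => [|d IH] hk xj.
    by have -> : Ordinal hk = j by apply: val_inj => /=; lia.
  have hk' : j + d < n by lia.
  have := step _ (IH hk' xj).
  have -> : ordS (Ordinal hk') = Ordinal hk; last by [].
  by apply: val_inj; rewrite ordS_val /=; case: ifP => h; lia.
move=> j xj i.
have hk : j + (n.-1 - j) < n by have := ltn_ord j; lia.
have := step _ (up _ _ hk xj).
have h0 : 0 < n by lia.
have -> : ordS (Ordinal hk) = Ordinal h0.
  by apply: val_inj; rewrite ordS_val /=; case: ifP => h; lia.
move=> x0.
have hi : (Ordinal h0) + i < n by rewrite /=; apply: ltn_ord.
have := up _ _ hi x0.
by have -> : Ordinal hi = i by apply: val_inj.
Qed.


Lemma notin_phi (B C : {set Xset n}) z : closed_for Sig C -> B \subset C ->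
  z \notin C -> z \notin phi Sig B.
Proof. by move=> cC BC zC; apply/negP => /(subsetP (phi_sub cC BC)); apply/negP. Qed.

Definition isx (z : Xset n) := if z is inl (inl _) then true else false.

Lemma nonx (A : {set Xset n}) z w : z != w -> z \notin A -> ~~ isx z ->
  z \notin phi Sig (w |: A).
Proof.
move=> zw zA zx.
apply: (@notin_phi _ ((w |: A) :|: [set z | isx z])).
- by apply/closedP; split => *; rewrite !inE orbT.
- by apply/subsetP => u uin; rewrite inE uin.
- by rewrite !inE (negbTE zA) (negbTE zx) (negbTE zw).
Qed.


Definition pos (k i : 'I_n) : nat := if k < i then i - k.+1 else i + n - k.+1.

Lemma pos_ordS k i : i != k -> pos k (ordS i) = (pos k i).+1.
Proof.
move=> /eqP ik; have ik' : (i : nat) <> k by move=> h; apply: ik; apply: val_inj.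
have := ltn_ord i; have := ltn_ord k.
case E: (i.+1 < n); rewrite /pos ordS_nat E /=; repeat (case: ifP => ?); lia.
Qed.

Lemma pos_inj k i j : pos k i = pos k j -> i = j.
Proof.
move=> h; apply: ord_inj; move: h; have := ltn_ord i; have := ltn_ord j; have := ltn_ord k.
rewrite /pos; case: ifP => h1; case: ifP => h2; lia.
Qed.

Definition Ccut (A : {set Xset n}) k l : {set Xset n} :=
  A :|: [set z | if z is inl (inl i) then pos k l <= pos k i else false].

Lemma Ccut_closed A k l : closed_for Sig A -> tv k \notin A -> fv k \notin A ->
  closed_for Sig (Ccut A k l).
Proof.
move=> /closedP [H1 H2 H3] tk fk; apply/closedP; split.
- move=> i; rewrite !inE orbF => /orP [xi|pi] ti; first by rewrite H1.
  have ik : i != k by apply: contraNneq tk => <-.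
  by rewrite /= pos_ordS // (leqW pi) orbT.
- move=> i; rewrite !inE orbF => /orP [xi|pi] ti; first by rewrite H2.
  have ik : i != k by apply: contraNneq fk => <-.
  by rewrite /= pos_ordS // (leqW pi) orbT.
- move=> c cP Hs; rewrite inE (H3 c cP) //; apply/subsetP => z zS.
  have := subsetP Hs z zS; rewrite !inE.
  by case/imsetP: zS => l0 _ ->; case: (l0.1); rewrite orbF.
Qed.

Lemma cut_case (A : {set Xset n}) k l m : closed_for Sig A -> tv k \notin A -> fv k \notin A ->
  l != m -> xv l \notin A -> xv m \notin A ->
  (xv m \notin phi Sig (xv l |: A)) || (xv l \notin phi Sig (xv m |: A)).
Proof.
move=> cA tk fk lm xl xm.
case: (ltnP (pos k m) (pos k l)) => h.
  apply/orP; left; apply: (@notin_phi _ (Ccut A k l)).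
  - exact: Ccut_closed.
  - by apply/subsetP => u; rewrite !inE => /orP [/eqP ->|->]; rewrite /= ?leqnn ?orbT.
  - by rewrite !inE (negbTE xm) /= -ltnNge.
apply/orP; right; apply: (@notin_phi _ (Ccut A k m)).
- exact: Ccut_closed.
- by apply/subsetP => u; rewrite !inE => /orP [/eqP ->|->]; rewrite /= ?leqnn ?orbT.
- rewrite !inE (negbTE xl) /= -ltnNge ltn_neqAle h andbT.
  by apply/eqP => /pos_inj e; move: lm; rewrite e eqxx.
Qed.


Lemma taut_conv : all (fun c : clause n => c != [::]) P -> tautology P -> convex_geometry Sig.
Proof.
move=> hne ht; split.
  apply/eqP; rewrite -subset0; apply: phi_sub => //.
  apply/closedP; split => [i|i|c cP Hs]; rewrite ?inE //.
  move: (allP hne c cP) Hs; case: c cP => [|l c'] //= cP _ Hs.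
  by have := subsetP Hs _ (imset_f (fun l : literal n => if l.1 then tv l.2 else fv l.2) (mem_head l c')); rewrite inE.
move=> A cA hAT x y hxy xA yA.
case Hy: (isx y); last by rewrite nonx // ?Hy // eq_sym.
case Hx: (isx x); last by rewrite orbC nonx // ?Hx.
move: Hx Hy xA yA hxy; case: x => [[l|]|] //; case: y => [[m|]|] // _ _ xl xm hlm.
have lm : l != m by apply: contraNneq hlm => ->.
case: (boolP [exists k, (tv k \notin A) && (fv k \notin A)]).
  by move/existsP => [k /andP [tk fk]]; exact: (cut_case cA tk fk lm xl xm).
move/existsPn => Hall.
have Htf : forall k, (tv k \in A) || (fv k \in A).
  by move=> k; have := Hall k; rewrite negb_and !negbK.
case/hasP: (ht (fun i => tv i \in A)) => c cP /allP Hc.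
have := cA; move/closedP => [_ _ H3].
have x0 : xv i0 \in A.
  apply: (H3 c cP); apply/subsetP => z /imsetP [[b i] li ->] /=.
  have := Hc _ li; rewrite /eval_lit /=.
  case: b {li} => /eqP //= h; have := Htf i; rewrite h //.
by have := all_x cA Htf x0 l; rewrite (negbTE xl).
Qed.

Lemma conv_taut : convex_geometry Sig -> tautology P.
Proof.
move=> [_ AE] v; apply/negPn/negP => Hn.
pose A : {set Xset n} := [set z : Xset n | match z with inl (inl _) => false | inl (inr i) => v i | inr i => ~~ v i end].
have cA : closed_for Sig A.
  apply/closedP; split => [i|i|c cP Hs]; rewrite ?inE //.
  case/negP: Hn; apply/hasP; exists c => //; apply/allP => [[b i]] li.
  have := subsetP Hs _ (imset_f (fun l : literal n => if l.1 then tv l.2 else fv l.2) li).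
  by rewrite inE /eval_lit /=; case: b {li} => /=; case: (v i).
have hAT : A != setT.
  by apply/negP => /eqP hA; move: (in_setT (xv i0)); rewrite -hA inE.
have hxy : xv i0 != xv (ordS i0).
  rewrite /xv /Xset; apply/negP => /eqP [] h; move: h; rewrite modn_small //.
have := AE A cA hAT _ _ hxy; rewrite !inE /= => /(_ isT isT) /orP.
have Htf : forall (w : Xset n) i, (tv i \in phi Sig (w |: A)) || (fv i \in phi Sig (w |: A)).
  move=> w i; case E: (v i).
  - by rewrite (subsetP (sub_phi _ _)) // !inE /= E ?orbT.
  - by rewrite orbC (subsetP (sub_phi _ _)) // !inE /= E ?orbT.
have Hin : forall j, xv j \in phi Sig (xv j |: A).
  by move=> j; rewrite (subsetP (sub_phi _ _)) // setU11.
by case; apply/negP; rewrite negbK; apply: all_x (phi_closed _ _) (Htf _) _ (Hin _) _.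
Qed.

End Main.

Theorem theorem5 (n : nat) (hn : 1 < n) (P : dnf n) :
  all (fun c : clause n => c != [::]) P ->
  (convex_geometry (Sigma_of (first_ord hn) P) <-> tautology P).
Proof. move=> hne; split; [exact: conv_taut | exact: taut_conv]. Qed.
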